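(* Fix $n\ge1$ and let $\mathcal A_n=\{(a_1,\dots,a_n):a_k\in\mathbb Z_{\ge0},\ \sum_{i=1}^n i a_i=n\}$. For $\theta>0$ let $\mathbf A_n$ be an $\mathcal A_n$-valued random variable with the Ewens sampling formula distribution $$P\{\mathbf A_n=(a_1,\dots,a_n)\}=\frac{n!}{\theta_{(n)}}\prod_{j=1}^n\Big(\frac\theta j\Big)^{a_j}\frac1{a_j!},\qquad \theta_{(n)}=\theta(\theta+1)\cdots(\theta+n-1).$$ Then, as $\theta\to\infty$, the family of laws of $\mathbf A_n$ satisfies an LDP on $\mathcal A_n$ with speed $\log\theta$ and rate function $$I_{\mathrm{esf}}(\mathbf a)=n-\sum_{i=1}^n a_i.$$
   Context: $\mathbf A_n$ records, for a random sample of size $n$ from a population distributed as $PD(\theta)$, the numbers $A_k$ of alleles appearing exactly $k$ times. An LDP with speed $\log\theta$ uses normalization $(\log\theta)^{-1}\log$ as $\theta\to\infty$. *)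

(* Defs.v *)
From HB Require Import structures.
From mathcomp Require Import all_boot all_order all_algebra.
From mathcomp Require Import all_classical all_reals all_analysis.
Set Implicit Arguments. Unset Strict Implicit. Unset Printing Implicit Defensive.
Import Order.TTheory GRing.Theory Num.Theory.
Import numFieldNormedType.Exports.
Local Open Scope ring_scope.

(* The state space: a = (a_1,...,a_n) is encoded as a : {ffun 'I_n -> 'I_n.+1},
   with a_j = a (j-1).  Any nonnegative integer vector with sum_i i a_i = n has
   a_i <= n, so the bound 'I_n.+1 loses nothing. *)
Definition Acal (n : nat) : {set {ffun 'I_n -> 'I_n.+1}} :=
  [set a : {ffun 'I_n -> 'I_n.+1} | (\sum_(j < n) j.+1 * a j)%N == n].

Definition rising {R : realType} (t : R) (n : nat) : R :=
  \prod_(i < n) (t + i%:R).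

Definition esf {R : realType} (n : nat) (t : R) (a : {ffun 'I_n -> 'I_n.+1}) : R :=
  (n`!)%:R / rising t n *
  \prod_(j < n) ((t / (j.+1)%:R) ^+ (a j) / ((a j : nat)`!)%:R).

Definition probF {R : realType} {T : finType} (p : T -> R) (F : {set T}) : R :=
  \sum_(x in F) p x.

Definition elog {R : realType} (x : R) : \bar R :=
  if x == 0 then (-oo)%E else (ln x)%:E.

Definition inf_on {R : realType} {T : finType} (I : T -> R) (F : {set T}) : \bar R :=
  \big[Order.min/(+oo)%E]_(x in F) (I x)%:E.

(* Large deviation principle, as theta -> +oo, with speed log theta, for a
   family of laws p theta (pmfs on the finite set S with discrete topology,
   so every subset of S is both open and closed) with rate function I:
   - I is a rate function: I >= 0 (lower semicontinuity is automatic);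
   - for every (closed) F in S: limsup (log theta)^-1 log P_theta(F) <= - inf_F I;
   - for every (open) G in S:  liminf (log theta)^-1 log P_theta(G) >= - inf_G I.
   The limsup/liminf bounds are written out as: for each real r above
   (resp. below) the bound, eventually (log theta)^-1 log P < r (resp. > r),
   after multiplying by log theta > 0. *)
Definition LDP_log_speed {R : realType} {T : finType}
    (p : R -> T -> R) (S : {set T}) (I : T -> R) : Prop :=
  [/\ (forall x, x \in S -> 0 <= I x),
      (forall F : {set T}, F \subset S -> forall r : R,
          (- inf_on I F < r%:E)%E ->
          \forall t \near +oo, (elog (probF (p t) F) < (r * ln t)%:E)%E) &
      (forall G : {set T}, G \subset S -> forall r : R,
          (r%:E < - inf_on I G)%E ->
          \forall t \near +oo, ((r * ln t)%:E < elog (probF (p t) G))%E)].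

Definition Iesf {R : realType} (n : nat) (a : {ffun 'I_n -> 'I_n.+1}) : R :=
  n%:R - \sum_(j < n) ((a j : nat)%:R).

(* Main.v *)
Require Import Defs.
From HB Require Import structures.
From mathcomp Require Import all_boot all_order all_algebra.
From mathcomp Require Import all_classical all_reals all_analysis.
From mathcomp Require Import ring lra.
Import Order.TTheory GRing.Theory Num.Theory.
Local Open Scope ring_scope.

Section H.
Variable R : realType.
Variable n : nat.
Implicit Types (t : R) (a : {ffun 'I_n -> 'I_n.+1}).

Definition Ka a := (\sum_(j < n) (a j : nat))%N.
Definition ca a : R := \prod_(j < n) ((((j.+1)%:R : R)^-1) ^+ a j / ((a j : nat)`!)%:R).

Lemma esfE t a : esf t a = (n`!)%:R / rising t n * (t ^+ Ka a * ca a).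
Proof.
rewrite /esf /Ka /ca -prodrXr -big_split /=; congr (_ * _).
by apply: eq_bigr => j _; rewrite exprMn mulrA.
Qed.

Lemma ca_gt0 a : 0 < ca a.
Proof.
apply: prodr_gt0 => j _; apply: mulr_gt0; first by apply: exprn_gt0; rewrite invr_gt0 ltr0Sn.
by rewrite invr_gt0 ltr0n fact_gt0.
Qed.

Lemma ca_le1 a : ca a <= 1.
Proof.
apply: (@le_trans _ _ (\prod_(j < n) (1:R))); last by rewrite big1.
apply: ler_prod => j _; apply/andP; split.
  apply: mulr_ge0; first by apply: exprn_ge0; rewrite invr_ge0 ler0n.
  by rewrite invr_ge0 ler0n.
apply: mulr_ile1.
- by apply: exprn_ge0; rewrite invr_ge0 ler0n.
- by rewrite invr_ge0 ler0n.
- by apply: exprn_ile1; [rewrite invr_ge0 ler0n| rewrite invf_le1 // ?ler1n ?ltr0Sn].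
- by rewrite invf_le1 ?ltr0n ?fact_gt0 // ler1n fact_gt0.
Qed.

Lemma prod_cst m (x : R) : \prod_(i < m) x = x ^+ m.
Proof. by elim: m => [|m IH]; rewrite ?big_ord0 ?expr0 // big_ord_recr /= IH exprSr. Qed.

Lemma rising_ge t : 0 < t -> t ^+ n <= rising t n.
Proof.
move=> t0; rewrite /rising -prod_cst.
apply: ler_prod => i _; rewrite ltW //= lerDl ler0n //.
Qed.

Lemma rising_le t : (n%:R <= t) -> 0 < t -> rising t n <= (2 * t) ^+ n.
Proof.
move=> nt t0; rewrite /rising -prod_cst.
apply: ler_prod => i _; apply/andP; split; first by rewrite addr_ge0 // ltW.
rewrite (_ : 2 * t = t + t); last by rewrite mulr2n mulrDl mul1r.
rewrite lerD2l; apply: le_trans nt; rewrite ler_nat ltnW //.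
Qed.

Lemma expR_nat t k : 0 < t -> expR (k%:R * ln t) = t ^+ k.
Proof. by move=> t0; rewrite mulr_natl -lnXn // lnK // posrE exprn_gt0. Qed.

Lemma esf_ub t a : 0 < t ->
  esf t a <= expR (ln ((n`!)%:R : R) + ((Ka a)%:R - n%:R) * ln t).
Proof.
move=> t0; have f0 : 0 < (n`!)%:R :> R by rewrite ltr0n fact_gt0.
rewrite expRD lnK ?posrE // mulrBl expRB !expR_nat // esfE.
have r0 : 0 < rising t n by exact: (lt_le_trans (exprn_gt0 n t0) (rising_ge _ t0)).
have tK : 0 < t ^+ Ka a by rewrite exprn_gt0.
have tn : 0 < t ^+ n by rewrite exprn_gt0.
apply: (@le_trans _ _ ((n`!)%:R / rising t n * t ^+ Ka a)).
  apply: ler_wpM2l; first exact: divr_ge0 (ltW f0) (ltW r0).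
  apply: ler_piMr; [exact: ltW | exact: ca_le1].
rewrite -mulrA; apply: ler_wpM2l; first exact: ltW.
rewrite mulrC; apply: ler_wpM2l; first exact: ltW.
by rewrite lef_pV2 ?posrE // rising_ge.
Qed.

Lemma esf_lb t a : 0 < t -> n%:R <= t ->
  expR (ln ((n`!)%:R * ca a) - n%:R * ln 2 + ((Ka a)%:R - n%:R) * ln t) <= esf t a.
Proof.
move=> t0 nt; have f0 : 0 < (n`!)%:R :> R by rewrite ltr0n fact_gt0.
have c0 := ca_gt0 a.
rewrite expRD expRB lnK ?posrE ?mulr_gt0 // mulrBl expRB !expR_nat //.
rewrite esfE.
have r0 : 0 < rising t n by exact: (lt_le_trans (exprn_gt0 n t0) (rising_ge _ t0)).
have tK : 0 < t ^+ Ka a by rewrite exprn_gt0.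
have tn : 0 < t ^+ n by rewrite exprn_gt0.
have t2n : 0 < 2 ^+ n :> R by rewrite exprn_gt0.
have t2 : 0 < (2 * t) ^+ n by rewrite exprn_gt0 // mulr_gt0.
apply: (@le_trans _ _ ((n`!)%:R / ((2 * t) ^+ n) * (t ^+ Ka a * ca a))); last first.
  apply: ler_wpM2r; first exact: mulr_ge0 (ltW tK) (ltW c0).
  apply: ler_wpM2l; first exact: ltW.
  by rewrite lef_pV2 ?posrE // rising_le.
rewrite exprMn le_eqVlt; apply/orP; left; apply/eqP.
field; apply/andP; split; exact: lt0r_neq0.
Qed.

Lemma esf_gt0 t a : 0 < t -> 0 < esf t a.
Proof.
move=> t0; rewrite esfE; have r0 : 0 < rising t n by exact: (lt_le_trans (exprn_gt0 n t0) (rising_ge _ t0)).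
apply: mulr_gt0; first by apply: divr_gt0 => //; rewrite ltr0n fact_gt0.
by apply: mulr_gt0; [exact: exprn_gt0 | exact: ca_gt0].
Qed.

Lemma IesfE a : Iesf a = n%:R - (Ka a)%:R :> R.
Proof. by rewrite /Iesf /Ka natr_sum. Qed.

End H.
Arguments Ka {n}. Arguments ca {R n}.
Arguments esf_ub {R n} t a. Arguments esf_lb {R n} t a.
Arguments esf_gt0 {R n} t a. Arguments IesfE {R n} a.

Lemma ev_ln (R : realType) (c d : R) : 0 < d -> \forall t \near +oo, c < d * ln t.
Proof.
move=> d0; apply: filterS (nbhs_pinfty_gt (num_real (expR (c / d)))) => t ht.
have : c / d < ln t.
  by rewrite -[c / d]expRK ltr_ln ?posrE ?expR_gt0 // (lt_trans (expR_gt0 _) ht).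
by rewrite ltr_pdivrMr // mulrC.
Qed.


Theorem theorem3p3 (R : realType) (n : nat) (hn : (1 <= n)%N) :
  LDP_log_speed (fun t : R => @esf R n t) (Acal n) (@Iesf R n).
Proof.
split.
- move=> x; rewrite inE => /eqP hx; rewrite IesfE subr_ge0 ler_nat.
  rewrite -{2}hx /Ka; apply: leq_sum => j _; exact: leq_pmull.
- move=> F sF r hr.
  have hx : forall x, x \in F -> (Ka x)%:R - n%:R < r.
    move=> x xF.
    have hI : (inf_on (@Iesf R n) F <= (Iesf x)%:E)%E.
      by rewrite /inf_on (bigD1 x) //= ge_min lexx.
    have : ((- Iesf x)%:E < r%:E)%E.
      by apply: le_lt_trans hr; rewrite EFinN leeN2.
    by rewrite lte_fin IesfE opprB.
  set N : R := (#|F|.+1)%:R.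
  have N0 : 0 < N by rewrite ltr0n.
  have ev : \forall t \near +oo, forall x, x \in F -> esf t x * N < expR (r * ln t).
    apply: filter_forall => x.
    case xF: (x \in F); last by apply: nearW.
    have := hx x xF => hxr.
    near=> t.
    have t0 : 0 < t by near: t; apply: nbhs_pinfty_gt; exact: num_real.
    have hl : ln ((n`!)%:R : R) + ln N < (r - ((Ka x)%:R - n%:R)) * ln t.
      by near: t; apply: ev_ln; rewrite subr_gt0.
    move=> _; apply: (le_lt_trans (y := expR (ln ((n`!)%:R : R) + ((Ka x)%:R - n%:R) * ln t) * N)).
      by apply: ler_wpM2r; [exact: ltW | exact: esf_ub].
    rewrite -[X in _ * X](@lnK _ N) ?posrE // -expRD ltr_expR.
    move: hl; rewrite mulrBl; lra.
  near=> t.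
  have t0 : 0 < t by near: t; apply: nbhs_pinfty_gt; exact: num_real.
  have H : forall x, x \in F -> esf t x * N < expR (r * ln t) by near: t; exact: ev.
  rewrite /elog /probF; case: eqP => P0; first exact: ltNyr.
  rewrite lte_fin -[r * ln t]expRK ltr_ln ?posrE ?expR_gt0 //; last first.
    rewrite lt0r; apply/andP; split; first by apply/eqP.
    by apply: sumr_ge0 => x _; apply: ltW; exact: esf_gt0.
  apply: (le_lt_trans (y := \sum_(x in F) (expR (r * ln t) / N))).
    by apply: ler_sum => x xF; rewrite ler_pdivlMr // ltW // H.
  rewrite sumr_const -mulr_natr -mulrA gtr_pMr ?expR_gt0 //.
  by rewrite mulrC ltr_pdivrMr // mul1r ltr_nat.
- move=> G sG r hr.
  case: (boolP [exists x in G, r < - Iesf x]); last first.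
    rewrite negb_exists => /forallP hall.
    have : ((- r)%:E <= inf_on (@Iesf R n) G)%E.
      rewrite /inf_on; apply: (big_ind (fun y => (- r)%:E <= y)%E) => //.
      + exact: leey.
      + by move=> y z hy hz; rewrite le_min hy hz.
      + move=> x xG; have := hall x; rewrite xG /= -leNgt lee_fin.
        by rewrite lerNl.
    rewrite -leeN2 EFinN oppeK => h.
    by have := lt_le_trans hr h; rewrite ltxx.
  move=> /existsP [x0 /andP [x0G hx0]].
  move: hx0; rewrite IesfE opprB => hx0.
  near=> t.
  have t0 : 0 < t by near: t; apply: nbhs_pinfty_gt; exact: num_real.
  have nt : n%:R <= t by near: t; apply: nbhs_pinfty_ge; exact: num_real.
  have hl : - (ln ((n`!)%:R * ca x0) - n%:R * ln 2) < ((Ka x0)%:R - n%:R - r) * ln t.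
    by near: t; apply: ev_ln; rewrite subr_gt0.
  have e0 := esf_gt0 t x0 t0.
  have Pge : esf t x0 <= probF (@esf R n t) G.
    rewrite /probF (bigD1 x0) //= lerDl.
    by apply: sumr_ge0 => x _; apply: ltW; exact: esf_gt0.
  have P0 : 0 < probF (@esf R n t) G := lt_le_trans e0 Pge.
  rewrite /elog gt_eqF // lte_fin.
  rewrite -[r * ln t]expRK ltr_ln ?posrE ?expR_gt0 //.
  apply: lt_le_trans Pge; apply: lt_le_trans (esf_lb _ _ t0 nt).
  rewrite ltr_expR; move: hl; rewrite !mulrBl; lra.
Unshelve. all: end_near.
Qed.
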